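(* Let $\sigma>0$, $\eta>0$, $\hat\alpha>0$, $h>0$, $r\ge0$, $a\in\mathbb{R}$, $\beta\ge0$, and let $v_\beta\in C^1[0,\infty)$ be the unique solution of $\frac{\sigma^2}2v'(y)=\beta+\frac{\hat\alpha}4v(y)^2+\eta y(v(y)-\frac h\eta)-av(y)$, $y\ge0$, $v(0)=-r$. If $y>0$ is a local maximizer of $v_\beta$, then $v_\beta(y)\le h/\eta$. *)

(* Defs.v *)
From Stdlib Require Import Reals.
From Coquelicot Require Import Coquelicot.
Open Scope R_scope.

Definition ode_rhs (beta ahat eta h a y vy : R) : R :=
  beta + ahat / 4 * vy ^ 2 + eta * y * (vy - h / eta) - a * vy.

(* v is a C^1[0,oo) solution of the ODE on [0,oo) with v(0) = -r:
   two-sided derivative at every y > 0, one-sided (right) derivative at 0,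
   and the ODE holds at every y >= 0.  (Continuity of v' is automatic from
   the ODE, since the right-hand side is continuous in (y, v(y)).) *)
Definition is_ode_solution (sigma eta ahat h r a beta : R) (v : R -> R) : Prop :=
  v 0 = - r /\
  (forall y, 0 < y ->
     is_derive v y (ode_rhs beta ahat eta h a y (v y) / (sigma ^ 2 / 2))) /\
  filterlim (fun t => (v t - v 0) / t) (at_right 0)
    (locally (ode_rhs beta ahat eta h a 0 (v 0) / (sigma ^ 2 / 2))).

Definition local_max_on_nonneg (v : R -> R) (y : R) : Prop :=
  exists delta, 0 < delta /\
    forall z, 0 <= z -> Rabs (z - y) < delta -> v z <= v y.

(* Main.v *)
Require Import Defs.
From Stdlib Require Import Reals Lra.
From Coquelicot Require Import Coquelicot.
Open Scope R_scope.

Lemma derG (v : R -> R) y beta ahat eta h a c : c <> 0 -> eta <> 0 -> is_derive v y 0 ->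
  is_derive (fun z => (beta + ahat / 4 * v z ^ 2 + eta * z * (v z - h / eta) - a * v z) / c) y (eta * (v y - h / eta) / c).
Proof.
intros Hc He Hv.
auto_derive.
- assert (ex_derive v y) by (exists 0; exact Hv); tauto.
- replace (Derive (fun x : R => v x) y) with 0 by (symmetry; apply is_derive_unique; exact Hv).
  field. auto.
Qed.

Theorem lemma9 (sigma eta ahat h r a beta : R) (v : R -> R) (y : R) :
  0 < sigma -> 0 < eta -> 0 < ahat -> 0 < h -> 0 <= r -> 0 <= beta ->
  is_ode_solution sigma eta ahat h r a beta v ->
  0 < y -> local_max_on_nonneg v y ->
  v y <= h / eta.
Proof.
  intros Hs He Ha Hh Hr Hb [H0 [Hd _]] Hy [del [Hdel Hmax]].
  pose (cc := sigma ^ 2 / 2).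
  assert (Hc : 0 < cc) by (unfold cc; simpl; nra).
  pose (G := fun z => ode_rhs beta ahat eta h a z (v z) / cc).
  assert (HdG : forall z, 0 < z -> derivable_pt_lim v z (G z)).
  { intros z Hz. apply is_derive_Reals. apply Hd; exact Hz. }
  assert (HG0 : G y = 0).
  { pose (pr := exist (fun l => derivable_pt_lim v y l) (G y) (HdG y Hy)
                 : derivable_pt v y).
    change (derive_pt v y pr = 0).
    apply (deriv_maximum v (y - Rmin (y/2) del) (y + del)).
    - assert (Rmin (y/2) del > 0) by (apply Rmin_glb_lt; lra). lra.
    - lra.
    - intros x H1 H2. apply Hmax.
      + assert (Rmin (y/2) del <= y/2) by apply Rmin_l. lra.
      + assert (Rmin (y/2) del <= del) by apply Rmin_r.
        apply Rabs_def1; lra. }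
  destruct (Rle_or_lt (v y) (h / eta)) as [Hle|Hgt]; [exact Hle|exfalso].
  assert (HG' : derivable_pt_lim G y (eta * (v y - h / eta) / cc)).
  { apply is_derive_Reals. unfold G, ode_rhs. apply derG; try lra.
    rewrite <- HG0. apply Hd; exact Hy. }
  pose (D := eta * (v y - h / eta) / cc).
  assert (HD : 0 < D).
  { unfold D. apply Rdiv_lt_0_compat; [|lra]. apply Rmult_lt_0_compat; lra. }
  destruct (HG' (D/2) ltac:(lra)) as [[d Hdpos] Hd2].
  pose (e := Rmin (d/2) (del/2)).
  assert (He1 : 0 < e) by (apply Rmin_glb_lt; lra).
  assert (He2 : e <= d/2) by apply Rmin_l.
  assert (He3 : e <= del/2) by apply Rmin_r.
  destruct (MVT_cor2 v G y (y + e) ltac:(lra)) as [xi [Hxi1 Hxi2]].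
  { intros t Ht. apply HdG. lra. }
  assert (HGxi : 0 < G xi).
  { pose (k := xi - y).
    assert (Hk0 : k <> 0) by (unfold k; lra).
    assert (Hkd : Rabs k < d) by (unfold k; rewrite Rabs_right; lra).
    specialize (Hd2 k Hk0 Hkd).
    replace (y + k) with xi in Hd2 by (unfold k; ring).
    rewrite HG0 in Hd2.
    apply Rabs_def2 in Hd2. destruct Hd2 as [_ Hlo].
    assert (Hkp : 0 < k) by (unfold k; lra).
    fold D in Hlo.
    assert (Hq : D / 2 < (G xi - 0) / k) by lra.
    replace ((G xi - 0) / k) with (G xi * / k) in Hq by (unfold Rdiv; ring).
    assert (0 < / k) by (apply Rinv_0_lt_compat; exact Hkp).
    destruct (Rle_or_lt (G xi) 0) as [Hn|Hp]; [|exact Hp].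
    assert (G xi * / k <= 0) by nra. lra. }
  assert (Hvz : v (y + e) <= v y).
  { apply Hmax; [lra|]. rewrite Rabs_right; lra. }
  nra.
Qed.
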